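(* Let $P$ be a convex polygon with no two edges parallel. Let $Q=A_0A_1A_2A_3$ be an LMAP in $P$ with $A_0,A_1,A_2,A_3$ in clockwise order, and suppose $A_3$ lies in edge $e_i$ and $A_1$ lies in edge $e_j$, where $e_i\prec e_j$. Then $A_0$ lies on a vertex of $P$.
   Context: $P$ is a compact convex polygon with edges $e_1,\ldots,e_n$ in clockwise order and vertices $v_1,\ldots,v_n$, $e_i$ being the open segment (excluding endpoints) from $v_i$ to $v_{i+1}$ (indices mod $n$); ''lies in $e_i$'' means lies in this open segment. $\ell_i$ is the line containing $e_i$, $\mathsf{I}_{i,j}=\ell_i\cap\ell_j$. For distinct edges, $e_i\prec e_j$ means $\mathsf{I}_{i,j}=v_i+t(v_{i+1}-v_i)$ for some $t\ge1$ (equivalently the clockwise turning angle from direction $v_{i+1}-v_i$ to $v_{j+1}-v_j$ is in $(0,\pi)$). A parallelogram lies in $P$ if its corners lie in $P$. A parallelogram $A_0A_1A_2A_3$ lying in $P$ is locally maximal if there is $\delta>0$ such that every parallelogram $B_0B_1B_2B_3$ lying in $P$ with $|A_iB_i|<\delta$ for all $i$ has area at most that of $A_0A_1A_2A_3$; it is slidable if two corners lie in the same open edge of $P$. An LMAP is a locally maximal non-slidable parallelogram lying in $P$. *)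

(* Defs.v *)
From Stdlib Require Import Reals Lra Lia Arith.
Open Scope R_scope.

Definition point := (R * R)%type.

Definition padd (p q : point) : point := (fst p + fst q, snd p + snd q).
Definition psub (p q : point) : point := (fst p - fst q, snd p - snd q).
Definition pscale (t : R) (p : point) : point := (t * fst p, t * snd p).

(* cross product (z-component); standard orientation (y axis up) *)
Definition cross (p q : point) : R := fst p * snd q - snd p * fst q.

Definition dist (p q : point) : R :=
  sqrt ((fst p - fst q) ^ 2 + (snd p - snd q) ^ 2).

(* The polygon is given by n vertices v 0, ..., v (n-1) (0-based indexing,
   indices taken mod n); edge i goes from v i to v ((i+1) mod n). *)
Definition nxt (n i : nat) : nat := ((i + 1) mod n)%nat.

Definition edge_dir (n : nat) (v : nat -> point) (i : nat) : point :=
  psub (v (nxt n i)) (v i).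

(* v lists the vertices of a (nondegenerate, compact) convex polygon in
   clockwise order: every other vertex lies strictly to the right of each
   directed edge line v_i -> v_{i+1}. *)
Definition convex_cw_polygon (n : nat) (v : nat -> point) : Prop :=
  (3 <= n)%nat /\
  forall i k, (i < n)%nat -> (k < n)%nat -> k <> i -> k <> nxt n i ->
    cross (edge_dir n v i) (psub (v k) (v i)) < 0.

Definition in_poly (n : nat) (v : nat -> point) (p : point) : Prop :=
  forall i, (i < n)%nat -> cross (edge_dir n v i) (psub p (v i)) <= 0.

Definition no_parallel_edges (n : nat) (v : nat -> point) : Prop :=
  forall i j, (i < n)%nat -> (j < n)%nat -> i <> j ->
    cross (edge_dir n v i) (edge_dir n v j) <> 0.

Definition in_open_edge (n : nat) (v : nat -> point) (i : nat) (p : point) : Prop :=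
  exists t, 0 < t < 1 /\ p = padd (v i) (pscale t (edge_dir n v i)).

Definition on_line (n : nat) (v : nat -> point) (j : nat) (p : point) : Prop :=
  cross (edge_dir n v j) (psub p (v j)) = 0.

(* e_i ≺ e_j : distinct edges and I_{i,j} = v_i + t (v_{i+1} - v_i) with t >= 1 *)
Definition prec (n : nat) (v : nat -> point) (i j : nat) : Prop :=
  i <> j /\
  exists t, 1 <= t /\ on_line n v j (padd (v i) (pscale t (edge_dir n v i))).

Definition is_parallelogram (A : nat -> point) : Prop :=
  padd (A 0%nat) (A 2%nat) = padd (A 1%nat) (A 3%nat).

Definition para_area (A : nat -> point) : R :=
  Rabs (cross (psub (A 1%nat) (A 0%nat)) (psub (A 3%nat) (A 0%nat))).

Definition para_in_poly (n : nat) (v : nat -> point) (A : nat -> point) : Prop :=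
  is_parallelogram A /\ forall k, (k < 4)%nat -> in_poly n v (A k).

Definition locally_maximal (n : nat) (v : nat -> point) (A : nat -> point) : Prop :=
  para_in_poly n v A /\
  exists delta, 0 < delta /\
    forall B : nat -> point, para_in_poly n v B ->
      (forall k, (k < 4)%nat -> dist (A k) (B k) < delta) ->
      para_area B <= para_area A.

Definition slidable (n : nat) (v : nat -> point) (A : nat -> point) : Prop :=
  exists i k l, (i < n)%nat /\ (k < 4)%nat /\ (l < 4)%nat /\ k <> l /\
    in_open_edge n v i (A k) /\ in_open_edge n v i (A l).

Definition LMAP (n : nat) (v : nat -> point) (A : nat -> point) : Prop :=
  locally_maximal n v A /\ ~ slidable n v A.

Definition para_clockwise (A : nat -> point) : Prop :=
  cross (psub (A 1%nat) (A 0%nat)) (psub (A 2%nat) (A 1%nat)) < 0.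

(* Main.v *)
Require Import Defs.
From Stdlib Require Import Reals Lra Lia Psatz Classical.
Open Scope R_scope.

Lemma nxt_cases n k : (k < n)%nat ->
  (nxt n k = S k /\ (S k < n)%nat) \/ (nxt n k = 0%nat /\ S k = n).
Proof.
  intros H. unfold nxt. destruct (Nat.eq_dec (k+1) n) as [e|e].
  - right. rewrite e, Nat.Div0.mod_same by lia. lia.
  - left. rewrite Nat.mod_small by lia. lia.
Qed.

Lemma nxt_lt n k : (k < n)%nat -> (nxt n k < n)%nat.
Proof. intros H; destruct (nxt_cases n k H) as [[-> ?]|[-> ?]]; lia. Qed.

Lemma pred_ex n k : (3 <= n)%nat -> (k < n)%nat -> exists m, (m < n)%nat /\ nxt n m = k.
Proof.
  intros H3 H. destruct k as [|k].
  - exists (n-1)%nat. split; [lia|]. destruct (nxt_cases n (n-1)) as [[? ?]|[? ?]]; lia.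
  - exists k. split; [lia|]. destruct (nxt_cases n k) as [[? ?]|[? ?]]; lia.
Qed.

Lemma vert_le n v m p : convex_cw_polygon n v -> (m < n)%nat -> (p < n)%nat ->
  cross (edge_dir n v m) (psub (v p) (v m)) <= 0.
Proof.
  intros [H3 Hc] Hm Hp.
  destruct (Nat.eq_dec p m) as [->|e1].
  - unfold cross, psub; simpl. nra.
  - destruct (Nat.eq_dec p (nxt n m)) as [->|e2].
    + unfold cross, edge_dir; simpl. nra.
    + apply Rlt_le. apply Hc; auto.
Qed.

Lemma turn n v k : convex_cw_polygon n v -> (k < n)%nat ->
  cross (edge_dir n v k) (edge_dir n v (nxt n k)) < 0.
Proof.
  intros Hcv Hk. pose proof Hcv as [H3 Hc].
  set (m := nxt n k). set (r := nxt n m).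
  assert (Hm : (m < n)%nat) by (apply nxt_lt; auto).
  assert (Hr : (r < n)%nat) by (apply nxt_lt; auto).
  assert (Hne : r <> k /\ r <> m).
  { unfold r, m. destruct (nxt_cases n k Hk) as [[E1 ?]|[E1 ?]]; rewrite E1;
    [destruct (nxt_cases n (S k)) as [[E2 ?]|[E2 ?]]|destruct (nxt_cases n 0) as [[E2 ?]|[E2 ?]]];
    try lia; rewrite E2; lia. }
  destruct Hne as [N1 N2].
  pose proof (Hc k r Hk Hr N1 N2) as X.
  unfold edge_dir, cross, psub in *. fold m in X |- *. fold r. simpl in *. lra.
Qed.

Lemma in_poly_coord n v p q : in_poly n v p -> fst p = fst q -> snd p = snd q -> in_poly n v q.
Proof. destruct p, q; simpl; intros H -> ->; auto. Qed.

Lemma seg_in_P n v k t : convex_cw_polygon n v -> (k < n)%nat -> 0 <= t <= 1 ->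
  in_poly n v (padd (v k) (pscale t (edge_dir n v k))).
Proof.
  intros Hcv Hk Ht m Hm.
  pose proof (vert_le n v m k Hcv Hm Hk) as V1.
  pose proof (vert_le n v m (nxt n k) Hcv Hm (nxt_lt _ _ Hk)) as V2.
  unfold edge_dir, cross, psub, padd, pscale in *; simpl in *.
  set (a := v k) in *. set (b := v (nxt n k)) in *. set (c := v m) in *. set (e := v (nxt n m)) in *.
  replace ((fst e - fst c) * (snd a + t * (snd b - snd a) - snd c) -
   (snd e - snd c) * (fst a + t * (fst b - fst a) - fst c)) with
   ((1-t) * ((fst e - fst c) * (snd a - snd c) - (snd e - snd c) * (fst a - fst c)) +
    t * ((fst e - fst c) * (snd b - snd c) - (snd e - snd c) * (fst b - fst c))) by ring.
  nra.
Qed.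

Lemma on_line_seg n v k p : convex_cw_polygon n v -> (k < n)%nat -> in_poly n v p ->
  cross (edge_dir n v k) (psub p (v k)) = 0 ->
  exists tau, 0 <= tau <= 1 /\ p = padd (v k) (pscale tau (edge_dir n v k)).
Proof.
  intros Hcv Hk Hp Hl.
  pose proof (turn n v k Hcv Hk) as T1.
  destruct (pred_ex n k (proj1 Hcv) Hk) as [m [Hm Em]].
  pose proof (turn n v m Hcv Hm) as T0. rewrite Em in T0.
  set (d := edge_dir n v k) in *.
  set (dd := fst d * fst d + snd d * snd d).
  assert (Hdd : dd > 0).
  { unfold dd. pose proof (Rle_0_sqr (fst d)) as Q1. pose proof (Rle_0_sqr (snd d)) as Q2.
    unfold Rsqr in *. destruct (Req_dec (fst d) 0) as [E|E].
    - destruct (Req_dec (snd d) 0) as [E'|E'].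
      + exfalso. unfold cross in T1. rewrite E, E' in T1. lra.
      + pose proof (Rsqr_pos_lt _ E'). unfold Rsqr in *. lra.
    - pose proof (Rsqr_pos_lt _ E). unfold Rsqr in *. lra. }
  set (zx := fst p - fst (v k)). set (zy := snd p - snd (v k)).
  set (tau := (zx * fst d + zy * snd d) / dd).
  assert (H1 : tau * dd = zx * fst d + zy * snd d) by (unfold tau; field; lra).
  assert (Hc : fst d * zy - snd d * zx = 0).
  { unfold cross, psub in Hl. simpl in Hl. unfold zx, zy, d, edge_dir, psub. simpl. lra. }
  idtac.
  assert (Ex : tau * fst d = zx).
  { assert ((tau * fst d - zx) * dd = 0).
    { replace ((tau * fst d - zx) * dd) with (fst d * (tau * dd) - zx * dd) by ring.
      rewrite H1. unfold dd. replace (fst d * (zx * fst d + zy * snd d) - zx * (fst d * fst d + snd d * snd d))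
        with (snd d * (fst d * zy - snd d * zx)) by ring. rewrite Hc; ring. }
    apply Rmult_integral in H. destruct H; lra. }
  assert (Ey : tau * snd d = zy).
  { assert ((tau * snd d - zy) * dd = 0).
    { replace ((tau * snd d - zy) * dd) with (snd d * (tau * dd) - zy * dd) by ring.
      rewrite H1. unfold dd. replace (snd d * (zx * fst d + zy * snd d) - zy * (fst d * fst d + snd d * snd d))
        with (- fst d * (fst d * zy - snd d * zx)) by ring. rewrite Hc; ring. }
    apply Rmult_integral in H. destruct H; lra. }
  assert (Ep : p = padd (v k) (pscale tau d)).
  { destruct p as [px py]. unfold padd, pscale; simpl in *. unfold zx, zy in *; simpl in *.
    f_equal; lra. }
  exists tau. split; [|exact Ep].
  split.
  - pose proof (Hp m Hm) as C. rewrite Ep in C.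
    unfold cross, psub, padd, pscale, edge_dir in C, T0. fold d in C, T0. rewrite Em in C, T0.
    unfold d, edge_dir in C, T0 |- *. simpl in *.
    set (a := v k) in *. set (b := v (nxt n k)) in *. set (c := v m) in *.
    replace ((fst a - fst c) * (snd a + tau * (snd b - snd a) - snd c) -
      (snd a - snd c) * (fst a + tau * (fst b - fst a) - fst c)) with
      (tau * ((fst a - fst c) * (snd b - snd a) - (snd a - snd c) * (fst b - fst a))) in C by ring.
    nra.
  - pose proof (Hp (nxt n k) (nxt_lt _ _ Hk)) as C. rewrite Ep in C.
    unfold cross, psub, padd, pscale, edge_dir in C, T1. unfold d, edge_dir in C, T1 |- *. simpl in *.
    set (a := v k) in *. set (b := v (nxt n k)) in *. set (c := v (nxt n (nxt n k))) in *.
    replace ((fst c - fst b) * (snd a + tau * (snd b - snd a) - snd b) -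
      (snd c - snd b) * (fst a + tau * (fst b - fst a) - fst b)) with
      (-(tau - 1) * ((fst b - fst a) * (snd c - snd b) - (snd b - snd a) * (fst c - fst b))) in C by ring.
    nra.
Qed.

Lemma param_small tau lam : 0 < tau < 1 -> exists dl, 0 < dl /\
  forall e, Rabs e < dl -> 0 <= tau + e * lam <= 1.
Proof.
  intros Ht. exists (Rmin tau (1 - tau) / (1 + Rabs lam)).
  assert (Hm : 0 < Rmin tau (1 - tau)) by (apply Rmin_pos; lra).
  assert (Hl : 0 <= Rabs lam) by apply Rabs_pos.
  split. { apply Rdiv_lt_0_compat; lra. }
  intros e He.
  assert (H1 : Rabs (e * lam) <= Rmin tau (1 - tau)).
  { rewrite Rabs_mult.
    apply Rle_trans with (Rmin tau (1 - tau) / (1 + Rabs lam) * Rabs lam).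
    - apply Rmult_le_compat_r; lra.
    - apply Rle_trans with (Rmin tau (1 - tau) / (1 + Rabs lam) * (1 + Rabs lam)).
      + apply Rmult_le_compat_l; [apply Rlt_le, Rdiv_lt_0_compat|]; lra.
      + right; field; lra. }
  pose proof (Rmin_l tau (1-tau)). pose proof (Rmin_r tau (1-tau)).
  pose proof (Rle_abs (e*lam)). pose proof (Rle_abs (-(e*lam))). rewrite Rabs_Ropp in *.
  lra.
Qed.

Lemma edge_perturb n v k tau lam : convex_cw_polygon n v -> (k < n)%nat -> 0 < tau < 1 ->
  exists dl, 0 < dl /\ forall e u, Rabs e < dl ->
    fst u = lam * fst (edge_dir n v k) -> snd u = lam * snd (edge_dir n v k) ->
    in_poly n v (padd (padd (v k) (pscale tau (edge_dir n v k))) (pscale e u)).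
Proof.
  intros Hcv Hk Ht. destruct (param_small tau lam Ht) as [dl [Hdl H]].
  exists dl. split; auto. intros e u He E1 E2.
  apply in_poly_coord with (padd (v k) (pscale (tau + e*lam) (edge_dir n v k))).
  - apply seg_in_P; auto.
  - unfold padd, pscale; simpl. rewrite E1. unfold edge_dir, psub; simpl. ring.
  - unfold padd, pscale; simpl. rewrite E2. unfold edge_dir, psub; simpl. ring.
Qed.

Lemma fin_min (f : nat -> R) n : (forall m, (m < n)%nat -> 0 < f m) ->
  exists dl, 0 < dl /\ forall m, (m < n)%nat -> dl <= f m.
Proof.
  induction n as [|n IH]; intros H.
  - exists 1. split; [lra|]. intros; lia.
  - destruct IH as [dl [Hdl Hm]]. { intros; apply H; lia. }
    exists (Rmin dl (f n)). split. { apply Rmin_pos; [exact Hdl| apply H; lia]. }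
    intros m Hm'. destruct (Nat.eq_dec m n) as [->|ne].
    + apply Rmin_r.
    + eapply Rle_trans; [apply Rmin_l|]. apply Hm; lia.
Qed.

Lemma interior_perturb n v p w : (forall m, (m < n)%nat -> cross (edge_dir n v m) (psub p (v m)) < 0) ->
  exists dl, 0 < dl /\ forall e, Rabs e < dl -> in_poly n v (padd p (pscale e w)).
Proof.
  intros H.
  destruct (fin_min (fun m => - cross (edge_dir n v m) (psub p (v m)) / (1 + Rabs (cross (edge_dir n v m) w))) n)
    as [dl [Hdl Hm]].
  { intros m Hm. apply Rdiv_lt_0_compat. specialize (H m Hm). lra. pose proof (Rabs_pos (cross (edge_dir n v m) w)). lra. }
  exists dl. split; auto. intros e He m Hmn.
  specialize (Hm m Hmn). simpl in Hm. specialize (H m Hmn).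
  set (a := cross (edge_dir n v m) (psub p (v m))) in *.
  set (x := cross (edge_dir n v m) w) in *.
  assert (E : cross (edge_dir n v m) (psub (padd p (pscale e w)) (v m)) = a + e * x).
  { unfold a, x, cross, psub, padd, pscale. simpl. ring. }
  rewrite E.
  set (g := - a / (1 + Rabs x)) in *.
  assert (Ea : a = - g * (1 + Rabs x)). { unfold g. field. pose proof (Rabs_pos x). lra. }
  pose proof (Rle_abs (e*x)). rewrite Rabs_mult in H0.
  assert (Rabs e * Rabs x <= g * Rabs x). { apply Rmult_le_compat_r. apply Rabs_pos. lra. }
  assert (0 < g) by lra.
  rewrite Ea. nra.
Qed.

Lemma dist_small p q e : Defs.dist p (padd p (pscale e q)) <= Rabs e * (Rabs (fst q) + Rabs (snd q)).
Proof.
  unfold Defs.dist. rewrite Rmult_plus_distr_l.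
  replace (fst p - fst (padd p (pscale e q))) with (-(e*fst q)) by (unfold padd, pscale; simpl; ring).
  replace (snd p - snd (padd p (pscale e q))) with (-(e*snd q)) by (unfold padd, pscale; simpl; ring).
  rewrite <- (pow2_abs (-(e*fst q))), <- (pow2_abs (-(e*snd q))), !Rabs_Ropp, !Rabs_mult.
  pose proof (Rabs_pos e). pose proof (Rabs_pos (fst q)). pose proof (Rabs_pos (snd q)).
  assert (0 <= Rabs e * Rabs (fst q)) by nra. assert (0 <= Rabs e * Rabs (snd q)) by nra.
  generalize dependent (Rabs e * Rabs (fst q)). generalize dependent (Rabs e * Rabs (snd q)).
  intros b Hb a Ha.
  rewrite <- (sqrt_pow2 (a + b)) by lra.
  apply sqrt_le_1_alt. nra.
Qed.

Lemma core n v A di dj s t d1 :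
  locally_maximal n v A ->
  cross (psub (A 1%nat) (A 0%nat)) (psub (A 3%nat) (A 0%nat)) < 0 ->
  cross di dj < 0 -> 0 < s * t -> 0 < d1 ->
  (forall e, Rabs e < d1 -> in_poly n v (padd (A 0%nat) (pscale e (padd (pscale s dj) (pscale t di))))) ->
  (forall e, Rabs e < d1 -> in_poly n v (padd (A 1%nat) (pscale e (pscale s dj)))) ->
  (forall e, Rabs e < d1 -> in_poly n v (padd (A 3%nat) (pscale e (pscale t di)))) ->
  False.
Proof.
  intros [[Hpar Hin] [delta [Hd HB]]] HS Hc Hst Hd1 H0 H1 H3.
  set (w0 := padd (pscale s dj) (pscale t di)). set (w1 := pscale s dj). set (w3 := pscale t di).
  pose proof (Rabs_pos (fst w0)). pose proof (Rabs_pos (snd w0)).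
  pose proof (Rabs_pos (fst w1)). pose proof (Rabs_pos (snd w1)).
  pose proof (Rabs_pos (fst w3)). pose proof (Rabs_pos (snd w3)).
  set (M := 1 + (Rabs (fst w0) + Rabs (snd w0)) + (Rabs (fst w1) + Rabs (snd w1)) + (Rabs (fst w3) + Rabs (snd w3))).
  assert (HM : 1 <= M) by (unfold M; lra).
  set (eta := Rmin (d1/2) (delta / (2*M))).
  assert (Heta1 : eta <= d1/2) by apply Rmin_l.
  assert (Heta2 : eta <= delta/(2*M)) by apply Rmin_r.
  assert (Heta : 0 < eta) by (apply Rmin_pos; [lra| apply Rdiv_lt_0_compat; lra]).
  assert (Hsmall : forall X, 0 <= X <= M -> eta * X < delta).
  { intros X HX. apply Rle_lt_trans with (delta / (2*M) * M).
    - apply Rle_trans with (eta * M). apply Rmult_le_compat_l; lra. apply Rmult_le_compat_r; lra.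
    - replace (delta / (2*M) * M) with (delta/2) by (field; lra). lra. }
  set (Sa := cross (psub (A 1%nat) (A 0%nat)) (psub (A 3%nat) (A 0%nat))) in *.
  set (L := - s * cross (psub (A 1%nat) (A 0%nat)) dj - t * cross di (psub (A 3%nat) (A 0%nat))).
  assert (exists sg, (sg = 1 \/ sg = -1) /\ sg * L <= 0) as [sg [Hsg HsL]].
  { destruct (Rle_dec 0 L). exists (-1). split; [right; reflexivity| lra].
    exists 1. split; [left; reflexivity| lra]. }
  set (e := sg * eta).
  assert (He : Rabs e = eta).
  { unfold e. destruct Hsg as [-> | ->].
    - rewrite Rmult_1_l. apply Rabs_right; lra.
    - replace (-1 * eta) with (- eta) by ring. rewrite Rabs_Ropp. apply Rabs_right; lra. }
  assert (He1 : Rabs e < d1) by lra.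
  set (B := fun k : nat => match k with
     | 0%nat => padd (A 0%nat) (pscale e w0)
     | 1%nat => padd (A 1%nat) (pscale e w1)
     | 3%nat => padd (A 3%nat) (pscale e w3)
     | _ => A k end).
  assert (HpB : para_in_poly n v B).
  { split.
    - unfold is_parallelogram in *. unfold B.
      pose proof (f_equal fst Hpar) as Hx. pose proof (f_equal snd Hpar) as Hy.
      unfold w0, w1, w3, padd, pscale in *; simpl in *. f_equal; lra.
    - intros k Hk. destruct k as [|[|[|[|k]]]]; simpl.
      + apply H0; auto.
      + apply H1; auto.
      + apply Hin; lia.
      + apply H3; auto.
      + lia. }
  assert (Hdist : forall k, (k < 4)%nat -> Defs.dist (A k) (B k) < delta).
  { intros k Hk. destruct k as [|[|[|[|k]]]]; simpl.
    - eapply Rle_lt_trans; [apply dist_small|]. rewrite He. apply Hsmall. unfold M; lra.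
    - eapply Rle_lt_trans; [apply dist_small|]. rewrite He. apply Hsmall. unfold M; lra.
    - unfold Defs.dist. replace ((fst (A 2%nat) - fst (A 2%nat)) ^ 2 + (snd (A 2%nat) - snd (A 2%nat)) ^ 2) with 0 by ring.
      rewrite sqrt_0. lra.
    - eapply Rle_lt_trans; [apply dist_small|]. rewrite He. apply Hsmall. unfold M; lra.
    - lia. }
  pose proof (HB B HpB Hdist) as Harea.
  unfold para_area in Harea. simpl in Harea.
  assert (Ecr : cross (psub (padd (A 1%nat) (pscale e w1)) (padd (A 0%nat) (pscale e w0)))
                      (psub (padd (A 3%nat) (pscale e w3)) (padd (A 0%nat) (pscale e w0)))
            = Sa + e * L + e^2 * (t * s * cross di dj)).
  { unfold Sa, L, w0, w1, w3, cross, psub, padd, pscale; simpl. ring. }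
  rewrite Ecr in Harea. fold Sa in Harea.
  assert (HeL : e * L <= 0) by (unfold e; nra).
  assert (He2 : 0 < e^2) by (assert (e <> 0) by (intro Z; rewrite Z, Rabs_R0 in He; lra); nra).
  assert (Hq : e^2 * (t * s * cross di dj) < 0).
  { assert (Hq0 : t * s * cross di dj < 0).
    { replace (t * s * cross di dj) with ((s * t) * cross di dj) by ring.
      apply Rmult_pos_neg; auto. }
    apply Rmult_pos_neg; auto. }
  rewrite (Rabs_left Sa) in Harea by lra.
  rewrite Rabs_left in Harea by lra.
  lra.
Qed.

Lemma sign_lemma c S p q X0 Y0 X1 Y1 K1 K3 : c < 0 -> S < 0 -> p <> 0 -> q <> 0 ->
  0 <= X0 -> 0 <= Y0 -> X1 <= 0 -> Y1 <= 0 -> K1 <= 0 -> K3 <= 0 ->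
  c * K1 = - p * Y0 - q * X1 -> c * K3 = - p * Y1 - q * X0 -> c * S = X1 * Y1 - X0 * Y0 ->
  0 < p * q.
Proof.
  intros Hc HS Hp Hq HX0 HY0 HX1 HY1 HK1 HK3 E1 E3 ES.
  assert (HcS : 0 < c * S) by nra.
  assert (HcK1 : 0 <= c * K1) by nra.
  assert (HcK3 : 0 <= c * K3) by nra.
  destruct (Rtotal_order p 0) as [Hp'|[Hp'|Hp']]; [|contradiction|];
  destruct (Rtotal_order q 0) as [Hq'|[Hq'|Hq']]; try contradiction;
  first [nra
    | (assert (A1 : - p * Y1 <= 0) by nra; assert (A2 : - q * X0 <= 0) by nra;
       assert (Y1 = 0) by nra; assert (X0 = 0) by nra; subst; nra)
    | (assert (A1 : - p * Y0 <= 0) by nra; assert (A2 : - q * X1 <= 0) by nra;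
       assert (Y0 = 0) by nra; assert (X1 = 0) by nra; subst; nra)].
Qed.

Theorem lemma10 (n : nat) (v : nat -> point) (A : nat -> point) (i j : nat) :
  convex_cw_polygon n v ->
  no_parallel_edges n v ->
  LMAP n v A ->
  para_clockwise A ->
  (i < n)%nat -> (j < n)%nat ->
  in_open_edge n v i (A 3%nat) ->
  in_open_edge n v j (A 1%nat) ->
  prec n v i j ->
  exists k, (k < n)%nat /\ A 0%nat = v k.
Proof.
  intros Hcv Hnp [HLM Hns] Hcw Hi Hj HA3 HA1 [Hij [t0 [Ht0 Hon]]].
  pose proof HLM as [[Hpar Hin] _].
  pose proof HA3 as [t3 [Ht3 E3]]. pose proof HA1 as [t1 [Ht1 E1]].
  pose proof (f_equal fst Hpar) as Hpx. pose proof (f_equal snd Hpar) as Hpy.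
  unfold padd in Hpx, Hpy; simpl in Hpx, Hpy.
  assert (HS : cross (psub (A 1%nat) (A 0%nat)) (psub (A 3%nat) (A 0%nat)) < 0).
  { unfold para_clockwise in Hcw.
    replace (psub (A 3%nat) (A 0%nat)) with (psub (A 2%nat) (A 1%nat)); auto.
    unfold psub. f_equal; lra. }
  assert (Hc : cross (edge_dir n v i) (edge_dir n v j) < 0).
  { pose proof (vert_le n v j i Hcv Hj Hi) as V.
    pose proof (Hnp i j Hi Hj Hij) as NP.
    unfold on_line in Hon.
    assert (E : cross (edge_dir n v j) (psub (v i) (v j)) - t0 * cross (edge_dir n v i) (edge_dir n v j) = 0).
    { rewrite <- Hon. unfold cross, psub, padd, pscale. simpl. ring. }
    destruct (Rtotal_order (cross (edge_dir n v i) (edge_dir n v j)) 0) as [?|[?|?]]; [auto|contradiction|nra]. }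
  destruct (classic (exists k, (k < n)%nat /\ cross (edge_dir n v k) (psub (A 0%nat) (v k)) = 0))
    as [[k [Hk Hon0]] | Hno].
  - destruct (on_line_seg n v k (A 0%nat) Hcv Hk (Hin 0%nat ltac:(lia)) Hon0) as [tau [Htau EA0]].
    destruct (Req_dec tau 0) as [Z|Z].
    { exists k. split; auto. rewrite EA0, Z. unfold padd, pscale. destruct (v k). simpl. f_equal; ring. }
    destruct (Req_dec tau 1) as [U|U].
    { exists (nxt n k). split; [apply nxt_lt; auto|]. rewrite EA0, U. unfold padd, pscale, edge_dir, psub.
      destruct (v k), (v (nxt n k)). simpl. f_equal; ring. }
    exfalso.
    assert (Htau' : 0 < tau < 1) by lra.
    assert (Hki : k <> i).
    { intro Ek. subst k. apply Hns. exists i, 0%nat, 3%nat. repeat split; try lia; auto.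
      exists tau. auto. }
    assert (Hkj : k <> j).
    { intro Ek. subst k. apply Hns. exists j, 0%nat, 1%nat. repeat split; try lia; auto.
      exists tau. auto. }
    set (p := cross (edge_dir n v k) (edge_dir n v i)).
    set (q := cross (edge_dir n v j) (edge_dir n v k)).
    assert (Hp : p <> 0) by (apply Hnp; auto).
    assert (Hq : q <> 0) by (apply Hnp; auto).
    assert (HX0 : 0 <= cross (edge_dir n v i) (psub (A 3%nat) (A 0%nat))).
    { pose proof (Hin 0%nat ltac:(lia) i Hi) as K. rewrite E3.
      unfold cross, psub, padd, pscale, edge_dir in *. simpl in *. lra. }
    assert (HY0 : 0 <= cross (edge_dir n v j) (psub (A 1%nat) (A 0%nat))).
    { pose proof (Hin 0%nat ltac:(lia) j Hj) as K. rewrite E1.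
      unfold cross, psub, padd, pscale, edge_dir in *. simpl in *. lra. }
    assert (HX1 : cross (edge_dir n v i) (psub (A 1%nat) (A 0%nat)) <= 0).
    { pose proof (Hin 2%nat ltac:(lia) i Hi) as K. unfold cross, psub in K.
      replace (fst (A 2%nat)) with (fst (A 1%nat) + fst (A 3%nat) - fst (A 0%nat)) in K by lra.
      replace (snd (A 2%nat)) with (snd (A 1%nat) + snd (A 3%nat) - snd (A 0%nat)) in K by lra.
      rewrite E3 in K.
      unfold cross, psub, padd, pscale, edge_dir in *. simpl in *. lra. }
    assert (HY1 : cross (edge_dir n v j) (psub (A 3%nat) (A 0%nat)) <= 0).
    { pose proof (Hin 2%nat ltac:(lia) j Hj) as K. unfold cross, psub in K.
      replace (fst (A 2%nat)) with (fst (A 1%nat) + fst (A 3%nat) - fst (A 0%nat)) in K by lra.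
      replace (snd (A 2%nat)) with (snd (A 1%nat) + snd (A 3%nat) - snd (A 0%nat)) in K by lra.
      rewrite E1 in K.
      unfold cross, psub, padd, pscale, edge_dir in *. simpl in *. lra. }
    assert (HK1 : cross (edge_dir n v k) (psub (A 1%nat) (A 0%nat)) <= 0).
    { pose proof (Hin 1%nat ltac:(lia) k Hk) as K.
      replace (cross (edge_dir n v k) (psub (A 1%nat) (A 0%nat))) with
        (cross (edge_dir n v k) (psub (A 1%nat) (v k)) - cross (edge_dir n v k) (psub (A 0%nat) (v k)))
        by (unfold cross, psub; cbn [fst snd]; ring).
      lra. }
    assert (HK3 : cross (edge_dir n v k) (psub (A 3%nat) (A 0%nat)) <= 0).
    { pose proof (Hin 3%nat ltac:(lia) k Hk) as K.
      replace (cross (edge_dir n v k) (psub (A 3%nat) (A 0%nat))) with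
        (cross (edge_dir n v k) (psub (A 3%nat) (v k)) - cross (edge_dir n v k) (psub (A 0%nat) (v k)))
        by (unfold cross, psub; cbn [fst snd]; ring).
      lra. }
    assert (Hpq : 0 < p * q).
    { eapply (sign_lemma _ _ p q _ _ _ _ _ _ Hc HS Hp Hq HX0 HY0 HX1 HY1 HK1 HK3);
        unfold p, q, cross, psub; ring. }
    destruct (edge_perturb n v k tau (- cross (edge_dir n v i) (edge_dir n v j)) Hcv Hk Htau') as [da [Hda Pa]].
    destruct (edge_perturb n v j t1 p Hcv Hj Ht1) as [db [Hdb Pb]].
    destruct (edge_perturb n v i t3 q Hcv Hi Ht3) as [dc [Hdc Pc]].
    apply (core n v A (edge_dir n v i) (edge_dir n v j) p q (Rmin da (Rmin db dc))); auto.
    + apply Rmin_pos; auto. apply Rmin_pos; auto.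
    + intros e He. rewrite EA0. apply Pa.
      * eapply Rlt_le_trans; [exact He| apply Rmin_l].
      * unfold p, q, cross, padd, pscale. simpl. ring.
      * unfold p, q, cross, padd, pscale. simpl. ring.
    + intros e He. rewrite E1. apply Pb; auto.
      eapply Rlt_le_trans; [exact He|]. eapply Rle_trans; [apply Rmin_r| apply Rmin_l].
    + intros e He. rewrite E3. apply Pc; auto.
      eapply Rlt_le_trans; [exact He|]. eapply Rle_trans; [apply Rmin_r| apply Rmin_r].
  - exfalso.
    assert (Hint : forall m, (m < n)%nat -> cross (edge_dir n v m) (psub (A 0%nat) (v m)) < 0).
    { intros m Hm. destruct (Rle_lt_or_eq_dec _ _ (Hin 0%nat ltac:(lia) m Hm)) as [?|E]; auto.
      exfalso. apply Hno. exists m. auto. }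
    destruct (interior_perturb n v (A 0%nat) (padd (pscale 1 (edge_dir n v j)) (pscale 1 (edge_dir n v i))) Hint)
      as [da [Hda Pa]].
    destruct (edge_perturb n v j t1 1 Hcv Hj Ht1) as [db [Hdb Pb]].
    destruct (edge_perturb n v i t3 1 Hcv Hi Ht3) as [dc [Hdc Pc]].
    apply (core n v A (edge_dir n v i) (edge_dir n v j) 1 1 (Rmin da (Rmin db dc))); auto.
    + lra.
    + apply Rmin_pos; auto. apply Rmin_pos; auto.
    + intros e He. apply Pa.
      eapply Rlt_le_trans; [exact He| apply Rmin_l].
    + intros e He. rewrite E1. apply Pb; auto.
      eapply Rlt_le_trans; [exact He|]. eapply Rle_trans; [apply Rmin_r| apply Rmin_l].
    + intros e He. rewrite E3. apply Pc; auto.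
      eapply Rlt_le_trans; [exact He|]. eapply Rle_trans; [apply Rmin_r| apply Rmin_r].
Qed.
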